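(* Let $A\in\mathbb{C}^{n\times n}$ and let $\|\cdot\|$ be any vector norm on $\mathbb{C}^n$ with induced matrix norm. Then $\inf_{t\in\mathbb{R}}\|Q_1(t)\|>0$, and for every $u\in\mathbb{C}^n$ satisfying the RLGE condition, $\inf_{t\in\mathbb{R}}\|Q_1(t)u\|>0$. Consequently, for $y_0\neq0$ and unit $\hat z_0$ both satisfying the RLGE condition, the functions $t\mapsto \|Q_1(t)\hat z_0\|/\|Q_1(t)\hat y_0\|$ and $t\mapsto \|Q_1(t)\|/\|Q_1(t)\hat y_0\|$ are bounded on $\mathbb{R}$ and bounded away from $0$ on $\mathbb{R}$.
   Context: $\hat y_0=y_0/\|y_0\|$. Let $\lambda_1,\dots,\lambda_p$ be the distinct eigenvalues of $A$, $\omega_i=\operatorname{Im}\lambda_i$. Fix a Jordan basis $v^{(i,j,k)}$, $i\in\{1,\dots,p\}$, $j\in\{1,\dots,d_i\}$ ($d_i$ the geometric multiplicity of $\lambda_i$), $k\in\{1,\dots,m_{ij}\}$, consisting of Jordan chains: $(A-\lambda_iI)v^{(i,j,1)}=0$, $(A-\lambda_iI)v^{(i,j,k)}=v^{(i,j,k-1)}$ for $k\ge2$. Let $V$ be the matrix with these columns in lexicographic order of $(i,j,k)$ and $w^{(i,j,k)}$ the rows of $V^{-1}$ in the same order; $\alpha_{ijk}(u)=w^{(i,j,k)}u$. $\Lambda_1$ is the set of eigenvalues with maximal real part, $M_1=\max_{\lambda_i\in\Lambda_1}\max_j m_{ij}$, and $$Q_1(t)=\sum_{\lambda_i\in\Lambda_1,\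 j\in\{1,\dots,d_i\},\ m_{ij}=M_1} e^{\sqrt{-1}\,\omega_i t}\,v^{(i,j,1)}w^{(i,j,M_1)}.$$ $u$ satisfies the RLGE condition if $\alpha_{ijM_1}(u)\neq0$ for some $(i,j)$ with $\lambda_i\in\Lambda_1$, $m_{ij}=M_1$. *)

(* Defs.v *)
From mathcomp Require Import all_boot all_order all_algebra.
From mathcomp Require Import all_classical all_reals all_analysis.
From mathcomp Require Import complex.
Set Implicit Arguments. Unset Strict Implicit. Unset Printing Implicit Defensive.
Import Order.TTheory GRing.Theory Num.Theory.
Local Open Scope ring_scope.
Local Open Scope classical_set_scope.

Definition cexpi (R : realType) (x : R) : R[i] := (cos x +i* sin x)%C.

Definition is_vector_norm (R : realType) (n : nat) (N : 'cV[R[i]]_n -> R) : Prop :=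
  [/\ (forall x, 0 <= N x),
      (forall x, N x = 0 -> x = 0),
      (forall (c : R[i]) x, N (c *: x) = complex.Re `|c| * N x)
    & (forall x y, N (x + y) <= N x + N y)].

Definition ind_norm (R : realType) (n : nat) (N : 'cV[R[i]]_n -> R)
    (M : 'M[R[i]]_n) : R :=
  sup [set N (M *m x) | x in [set x | N x = 1]].

(* The Jordan chains are indexed by c : 'I_q (these are the
   pairs (i,j) of the paper, flattened); chain c has eigenvalue lam c and length
   m c.  Column l of the invertible matrix V is the vector v^{(c,k)} with
   c = ch l, k = pos l.  The rows of invmx V are the w^{(c,k)} in the same order. *)
Definition jordan_basis (R : realType) (n q : nat) (A : 'M[R[i]]_n)
    (lam : 'I_q -> R[i]) (m : 'I_q -> nat) (ch : 'I_n -> 'I_q)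
    (pos : 'I_n -> nat) (V : 'M[R[i]]_n) : Prop :=
  V \in unitmx /\
  (forall c, 0 < m c)%N /\
  (forall l, 1 <= pos l <= m (ch l))%N /\
  (forall l l', ch l = ch l' -> pos l = pos l' -> l = l') /\
  (forall c k, (1 <= k <= m c)%N -> exists l, ch l = c /\ pos l = k) /\
  (forall l, pos l = 1%N -> (A - (lam (ch l))%:M) *m col l V = 0) /\
  (forall l, (1 < pos l)%N -> exists l', [/\ ch l' = ch l, pos l' = (pos l).-1
          & (A - (lam (ch l))%:M) *m col l V = col l' V]).

Definition inLam1 (R : realType) (q : nat) (lam : 'I_q -> R[i]) (c : 'I_q) : bool :=
  [forall c' : 'I_q, complex.Re (lam c') <= complex.Re (lam c)].

Definition M1 (R : realType) (q : nat) (lam : 'I_q -> R[i]) (m : 'I_q -> nat) : nat :=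
  (\max_(c < q | inLam1 lam c) m c)%N.

Definition Q1 (R : realType) (n q : nat) (lam : 'I_q -> R[i]) (m : 'I_q -> nat)
    (ch : 'I_n -> 'I_q) (pos : 'I_n -> nat) (V : 'M[R[i]]_n) (t : R) : 'M[R[i]]_n :=
  \sum_(l1 < n) \sum_(l2 < n | [&& ch l1 == ch l2, inLam1 lam (ch l1),
        m (ch l1) == M1 lam m, pos l1 == 1%N & pos l2 == M1 lam m])
     cexpi (complex.Im (lam (ch l1)) * t) *: (col l1 V *m row l2 (invmx V)).

Definition RLGE (R : realType) (n q : nat) (lam : 'I_q -> R[i]) (m : 'I_q -> nat)
    (ch : 'I_n -> 'I_q) (pos : 'I_n -> nat) (V : 'M[R[i]]_n) (u : 'cV[R[i]]_n) : Prop :=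
  exists l : 'I_n, [/\ inLam1 lam (ch l), m (ch l) = M1 lam m, pos l = M1 lam m
                     & row l (invmx V) *m u != 0].

(* Main.v *)
Require Import Defs.
From mathcomp Require Import all_boot all_order all_algebra.
From mathcomp Require Import all_classical all_reals all_analysis.
From mathcomp Require Import complex.
From mathcomp Require Import ring lra.
Set Implicit Arguments. Unset Strict Implicit. Unset Printing Implicit Defensive.
Import Order.TTheory GRing.Theory Num.Theory.
Import numFieldNormedType.Exports.
Local Open Scope ring_scope.
Local Open Scope classical_set_scope.
Local Open Scope complex_scope.

Section Rabs.
Variable R : realType.
Definition rabs (z : R[i]) : R := complex.Re `|z|.

Lemma rabsE z : `|z| = (rabs z)%:C.
Proof. by rewrite /rabs RRe_real // normr_real. Qed.

Lemma rabs_ge0 z : 0 <= rabs z.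
Proof. by rewrite -ler0c -rabsE. Qed.

Lemma rabsM z w : rabs (z * w) = rabs z * rabs w.
Proof. by apply: complexI; rewrite rmorphM /= -!rabsE normrM. Qed.

Lemma rabsD z w : rabs (z + w) <= rabs z + rabs w.
Proof. by rewrite -lecR rmorphD /= -!rabsE ler_normD. Qed.

Lemma rabs0 : rabs 0 = 0.
Proof. by apply: complexI; rewrite -rabsE normr0. Qed.

Lemma rabs_eq0 z : rabs z = 0 -> z = 0.
Proof. by move=> h; apply/normr0_eq0; rewrite rabsE h. Qed.

Lemma rabsN z : rabs (- z) = rabs z.
Proof. by rewrite /rabs normrN. Qed.

Lemma rabsR (r : R) : rabs r%:C = `|r|.
Proof.
apply: complexI; rewrite -rabsE normc_def /=.
by rewrite expr0n /= addr0 sqrtr_sqr.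
Qed.

Lemma rabs_cexpi x : rabs (cexpi x) = 1.
Proof.
apply: complexI; rewrite -rabsE normc_def /cexpi.
change (complex.Re (cos x +i* sin x)) with (cos x).
change (complex.Im (cos x +i* sin x)) with (sin x).
by rewrite cos2Dsin2 sqrtr1.
Qed.

Lemma rabs_le_ReIm z : rabs z <= `|complex.Re z| + `|complex.Im z|.
Proof.
have -> : rabs z = Num.sqrt (complex.Re z ^+ 2 + complex.Im z ^+ 2).
  by apply: complexI; rewrite -rabsE normc_def.
rewrite -[X in _ <= X]ger0_norm ?addr_ge0 // -sqrtr_sqr.
apply: ler_wsqrtr.
rewrite sqrrD !real_normK ?num_real // lerD2r lerDl.
by rewrite mulrn_wge0 // mulr_ge0.
Qed.

Lemma rabs_sum (I : Type) (r : seq I) (P : pred I) (F : I -> R[i]) :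
  rabs (\sum_(i <- r | P i) F i) <= \sum_(i <- r | P i) rabs (F i).
Proof.
elim/big_rec2: _ => [|i y1 y2 _ H]; first by rewrite rabs0.
by apply: le_trans (rabsD _ _) _; rewrite lerD2l.
Qed.
End Rabs.

Section VNorm.
Variables (R : realType) (n : nat) (N : 'cV[R[i]]_n -> R).
Hypothesis hN : is_vector_norm N.

Lemma N_ge0 x : 0 <= N x. Proof. by case: hN. Qed.
Lemma N_eq0 x : N x = 0 -> x = 0. Proof. by case: hN => _ h _ _; exact: h. Qed.
Lemma NZ c x : N (c *: x) = rabs c * N x. Proof. by case: hN => _ _ h _; exact: h. Qed.
Lemma ND x y : N (x + y) <= N x + N y. Proof. by case: hN => _ _ _ h; exact: h. Qed.
Lemma N0 : N 0 = 0.
Proof. by rewrite -(scale0r (0 : 'cV[R[i]]_n)) NZ rabs0 mul0r. Qed.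
Lemma NN x : N (- x) = N x.
Proof. by rewrite -scaleN1r NZ rabsN -(rmorph1 (real_complex R)) rabsR normr1 mul1r. Qed.
Lemma N_dist x y : `|N x - N y| <= N (x - y).
Proof.
have h1 : N x <= N (x - y) + N y by rewrite -{1}(subrK y x) ND.
have h2 : N y <= N (x - y) + N x.
  by rewrite -[N (x - y)]NN opprB -{1}(subrK x y) ND.
by rewrite ler_norml; apply/andP; split; lra.
Qed.
Lemma N_sum (I : Type) (r : seq I) (P : pred I) (F : I -> 'cV[R[i]]_n) :
  N (\sum_(i <- r | P i) F i) <= \sum_(i <- r | P i) N (F i).
Proof.
elim/big_rec2: _ => [|i y1 y2 _ H]; first by rewrite N0.
by apply: le_trans (ND _ _) _; rewrite lerD2l.
Qed.

Lemma N_upper x : N x <= \sum_i rabs (x i 0) * N (delta_mx i 0).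
Proof.
rewrite {1}(matrix_sum_delta x); apply: le_trans (N_sum _ _ _) _.
apply: ler_sum => i _; rewrite big_ord1 NZ.
by rewrite (_ : ord0 = 0).
Qed.

Definition Emb (y : 'rV[R]_(n + n)) : 'cV[R[i]]_n :=
  \col_i ((y 0 (lshift n i)) +i* (y 0 (rshift n i))).

Lemma EmbB y z : Emb (y - z) = Emb y - Emb z.
Proof. by apply/matrixP => i j; rewrite !mxE. Qed.

Lemma EmbZ r y : Emb (r *: y) = r%:C *: Emb y.
Proof.
apply/matrixP => i j; rewrite !mxE; apply/eqP; rewrite eq_complex /=.
by rewrite !mul0r subr0 addr0 !eqxx.
Qed.

Lemma mxnorm_ge k (y : 'rV[R]_k) j : `|y 0 j| <= `|y|.
Proof.
rewrite [leRHS]/Num.norm /= mx_normrE; apply/bigmax_geP; right => /=.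
by exists (0, j).
Qed.

Lemma rabs_Emb y i : rabs (Emb y i 0) <= 2 * `|y|.
Proof.
apply: le_trans (rabs_le_ReIm _) _; rewrite !mxE /= mulr2n mulrDl mul1r.
by rewrite lerD // mxnorm_ge.
Qed.

Lemma N_lower : (0 < n)%N ->
  exists2 c, 0 < c & forall (x : 'cV[R[i]]_n) i, c * rabs (x i 0) <= N x.
Proof.
move=> n0.
set K := \sum_i N (delta_mx i 0 : 'cV[R[i]]_n).
have K0 : 0 <= K by apply: sumr_ge0 => i _; exact: N_ge0.
pose f := fun y : 'rV[R]_(n + n) => N (Emb y).
have lip y z : `|f y - f z| <= (2 * K + 1) * `|y - z|.
  apply: le_trans (N_dist _ _) _; rewrite -EmbB.
  apply: le_trans (N_upper _) _.
  apply: (@le_trans _ _ ((2 * `|y - z|) * K)).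
    rewrite /K mulr_sumr; apply: ler_sum => i _.
    by rewrite ler_wpM2r ?N_ge0 ?rabs_Emb.
  by rewrite mulrC mulrA ler_wpM2r // mulrC lerDl.
have fc : forall x : 'rV[R]_(n + n), {for x, continuous f}.
  move=> x; apply/(@cvgrPdist_lt _ _ _ (nbhs x)) => e e0; near=> z.
  apply: le_lt_trans (lip x z) _; rewrite -ltr_pdivlMl ?ltr_wpDl ?mulr_ge0 //.
  near: z; apply: cvgr_dist_lt => //; rewrite mulrC divr_gt0 // ltr_wpDl ?mulr_ge0 //.
pose S := [set y : 'rV[R]_(n + n) | `|y| = 1].
have S0 : S !=set0.
  pose y1 : 'rV[R]_(n + n) := const_mx 1.
  have y10 : y1 != 0.
    apply/negP => /eqP/matrixP/(_ 0 (lshift n (Ordinal n0))).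
    by rewrite !mxE => /eqP; rewrite oner_eq0.
  exists (`|y1|^-1 *: y1); rewrite /S /= normrZ normrV ?unitfE ?normr_eq0 //.
  by rewrite normr_id mulVf // normr_eq0.
have Sc : compact S.
  apply: bounded_closed_compact.
    exists 1; split => // M M1 y Sy; by rewrite /= Sy ltW.
  rewrite (_ : S = (fun y : 'rV[R]_(n + n) => `|y|) @^-1` [set x : R | x = 1]) //.
  apply: preimage_closed; last exact: closed_eq.
  by move=> x _; exact: norm_continuous.
have fcS : {within S, continuous f} by apply: continuous_subspaceT.
have [ys Sys miny] := EVT_min_rV S0 Sc fcS.
have ysS : S ys by rewrite inE in Sys.
have c0 : 0 < f ys.
  rewrite lt_def N_ge0 andbT; apply/eqP => /N_eq0 /matrixP h.
  have : ys = 0.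
    apply/rowP => j; rewrite mxE; case: (split_ordP j) => k ->.
      by have := congr1 (@complex.Re R) (h k 0); rewrite !mxE.
    by have := congr1 (@complex.Im R) (h k 0); rewrite !mxE.
  by move=> ys0; move: ysS; rewrite /S /= ys0 normr0 => /eqP; rewrite eq_sym oner_eq0.
exists (f ys / 2); first by rewrite divr_gt0.
move=> x i.
pose y : 'rV[R]_(n + n) :=
  row_mx (\row_k complex.Re (x k 0)) (\row_k complex.Im (x k 0)).
have Ey : Emb y = x.
  apply/matrixP => k j; rewrite (ord1 j) /Emb mxE row_mxEl row_mxEr !mxE.
  by case: (x k 0).
have [y0|y0] := eqVneq y 0.
  have x0 : x = 0 by rewrite -Ey y0; apply/matrixP => k j; rewrite !mxE.
  by rewrite x0 mxE rabs0 mulr0 N_ge0.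
have s0 : 0 < `|y| by rewrite normr_gt0.
have : f ys <= f (`|y|^-1 *: y).
  apply: miny; rewrite inE /S /= normrZ normrV ?unitfE ?normr_eq0 //.
  by rewrite normr_id mulVf // normr_eq0.
have si : `|(`|y|^-1)| = `|y|^-1 by rewrite ger0_norm // invr_ge0 ltW.
rewrite /f EmbZ NZ rabsR Ey si => h.
have h2 : f ys * `|y| <= N x by rewrite -ler_pdivlMr // mulrC.
apply: le_trans h2; rewrite -Ey.
rewrite -mulrA; apply: ler_wpM2l; first exact: ltW.
by rewrite mulrC ler_pdivrMr // mulrC; exact: rabs_Emb.
Unshelve. all: by end_near.
Qed.

End VNorm.

Section Bound.
Variables (R : realType) (n : nat) (N : 'cV[R[i]]_n -> R).
Hypothesis hN : is_vector_norm N.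
Variable c : R.
Hypothesis c0 : 0 < c.
Hypothesis hc : forall (x : 'cV[R[i]]_n) i, c * rabs (x i 0) <= N x.

Lemma rabs_le_N (x : 'cV[R[i]]_n) i : rabs (x i 0) <= N x / c.
Proof. by rewrite ler_pdivlMr // mulrC hc. Qed.

Lemma rabs_rowmul (r : 'rV[R[i]]_n) (x : 'cV[R[i]]_n) :
  rabs ((r *m x) 0 0) <= (\sum_j rabs (r 0 j)) * (N x / c).
Proof.
rewrite mxE mulr_suml; apply: le_trans (rabs_sum _ _ _) _.
apply: ler_sum => j _; rewrite rabsM ler_wpM2l ?rabs_ge0 //.
exact: rabs_le_N.
Qed.

Definition KN := \sum_i N (delta_mx i 0 : 'cV[R[i]]_n).

Lemma N_mul_bound (M : 'M[R[i]]_n) x B :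
  (forall i j, rabs (M i j) <= B) -> N (M *m x) <= B * (n%:R * KN / c) * N x.
Proof.
move=> hB; apply: le_trans (N_upper hN _) _.
apply: (@le_trans _ _ (\sum_(i < n) (B * (N x / c)) *+ n * N (delta_mx i 0))).
  apply: ler_sum => i _; rewrite ler_wpM2r ?N_ge0 //.
  rewrite mxE; apply: le_trans (rabs_sum _ _ _) _.
  rewrite -[n in _ *+ n]card_ord -sumr_const; apply: ler_sum => j _.
  by rewrite rabsM ler_pM ?rabs_ge0 ?rabs_le_N.
rewrite -mulr_sumr /KN -mulr_natr le_eqVlt; apply/orP; left; apply/eqP.
by field; exact: lt0r_neq0.
Qed.

End Bound.

Section Main.
Variables (R : realType) (n q : nat) (A : 'M[R[i]]_n) (lam : 'I_q -> R[i])
  (m : 'I_q -> nat) (ch : 'I_n -> 'I_q) (pos : 'I_n -> nat) (V : 'M[R[i]]_n).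
Hypothesis hJ : jordan_basis A lam m ch pos V.

Let W := invmx V.

Definition Pq (l1 l2 : 'I_n) := [&& ch l1 == ch l2, inLam1 lam (ch l1),
        m (ch l1) == M1 lam m, pos l1 == 1%N & pos l2 == M1 lam m].

Definition Dm (t : R) : 'M[R[i]]_n :=
  \matrix_(l1, l2) (if Pq l1 l2 then cexpi (complex.Im (lam (ch l1)) * t) else 0).

Lemma Q1E t : Q1 lam m ch pos V t = V *m Dm t *m W.
Proof.
apply/matrixP => i j; rewrite /Q1 summxE [RHS]mxE.
under [RHS]eq_bigr do rewrite mxE big_distrl /=.
rewrite exchange_big /=; apply: eq_bigr => l1 _.
rewrite summxE big_mkcond /=; apply: eq_bigr => l2 _.
rewrite !mxE /Pq; case: ifP => _; last by rewrite mulr0 mul0r.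
by rewrite big_ord1 !mxE mulrCA mulrA.
Qed.

Lemma WV : W *m V = 1.
Proof. by rewrite /W mulVmx //; case: hJ. Qed.

Lemma WQ t : W *m Q1 lam m ch pos V t = Dm t *m W.
Proof. by rewrite Q1E !mulmxA WV mul1mx. Qed.

Lemma lower_RLGE (N : 'cV[R[i]]_n -> R) (hN : is_vector_norm N) c
  (c0 : 0 < c) (hc : forall (x : 'cV[R[i]]_n) i, c * rabs (x i 0) <= N x)
  (u : 'cV[R[i]]_n) l :
  inLam1 lam (ch l) -> m (ch l) = M1 lam m -> pos l = M1 lam m ->
  (W *m u) l 0 != 0 ->
  exists2 d, 0 < d & forall t, d <= N (Q1 lam m ch pos V t *m u).
Proof.
move=> hl1 hl2 hl3 hu.
case: hJ => _ [mpos [_ [inj [ex _]]]].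
have [l1 [hc1 hp1]] : exists l1, ch l1 = ch l /\ pos l1 = 1%N.
  by apply: ex; rewrite leqnn /=; exact: mpos.
have key t : (W *m (Q1 lam m ch pos V t *m u)) l1 0 =
    cexpi (complex.Im (lam (ch l1)) * t) * (W *m u) l 0.
  rewrite mulmxA WQ -mulmxA mxE (bigD1 l) //= big1 ?addr0.
    by rewrite mxE /Pq hc1 eqxx hl1 hl2 hp1 hl3 !eqxx.
  move=> l2 hl2'; rewrite mxE /Pq; case: ifP => [|_]; last by rewrite mul0r.
  case/and5P => /eqP e1 _ _ _ /eqP e2.
  have el : l2 = l by apply: inj; [rewrite -e1 hc1 | rewrite e2 hl3].
  by move: hl2'; rewrite el eqxx.
set a := rabs ((W *m u) l 0).
have a0 : 0 < a.
  rewrite lt_def rabs_ge0 andbT; apply/eqP => /rabs_eq0 h0.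
  by move: hu; rewrite h0 eqxx.
set S := \sum_j rabs (W l1 j).
have S0 : 0 <= S by apply: sumr_ge0 => j _; exact: rabs_ge0.
exists (a * c / (S + 1)).
  by rewrite divr_gt0 ?mulr_gt0 // ltr_wpDl.
move=> t; set y := Q1 lam m ch pos V t *m u.
have h : a <= S * (N y / c).
  have -> : a = rabs ((W *m y) l1 0) by rewrite key rabsM rabs_cexpi mul1r.
  have := rabs_rowmul c0 hc (row l1 W) y.
  rewrite -row_mul mxE.
  have -> : \sum_j rabs (row l1 W 0 j) = S by apply: eq_bigr => j _; rewrite mxE.
  done.
have Ny0 : 0 <= N y by exact: N_ge0.
rewrite ler_pdivrMr ?ltr_wpDl //.
move: h; rewrite mulrA ler_pdivlMr // => h.
apply: le_trans h _; rewrite mulrC ler_wpM2l //; lra.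
Qed.

End Main.

Lemma le_sum_term (R : realType) (I : finType) (F : I -> R) i :
  (forall j, 0 <= F j) -> F i <= \sum_j F j.
Proof.
move=> h; rewrite (bigD1 i) //= lerDl; apply: sumr_ge0 => j _; exact: h.
Qed.

Section Main2.
Variables (R : realType) (n q : nat) (A : 'M[R[i]]_n) (lam : 'I_q -> R[i])
  (m : 'I_q -> nat) (ch : 'I_n -> 'I_q) (pos : 'I_n -> nat) (V : 'M[R[i]]_n).
Hypothesis hJ : jordan_basis A lam m ch pos V.

Lemma entry_bound : exists B, forall t i j, rabs (Q1 lam m ch pos V t i j) <= B.
Proof.
pose G i j := \sum_k \sum_l rabs (V i l) * rabs (invmx V k j).
have G0 i j : 0 <= G i j.
  by apply: sumr_ge0 => k _; apply: sumr_ge0 => l _; rewrite mulr_ge0 ?rabs_ge0.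
exists (\sum_i \sum_j G i j) => t i j.
apply: (@le_trans _ _ (G i j)); last first.
  apply: le_trans (le_sum_term _ _) (le_sum_term _ _) => [j'|i'].
    exact: G0.
  by apply: sumr_ge0 => j' _; exact: G0.
rewrite Q1E mxE; apply: le_trans (rabs_sum _ _ _) _; apply: ler_sum => k _.
rewrite rabsM mxE.
apply: (le_trans (ler_wpM2r (rabs_ge0 (invmx V k j)) (rabs_sum _ _ _))).
rewrite mulr_suml; apply: ler_sum => l _.
rewrite rabsM ler_wpM2r ?rabs_ge0 // ler_piMr ?rabs_ge0 //.
rewrite mxE; case: ifP => _; first by rewrite rabs_cexpi.
by rewrite rabs0.
Qed.

Lemma RLGE_W u : RLGE lam m ch pos V u -> exists l, [/\ inLam1 lam (ch l),
  m (ch l) = M1 lam m, pos l = M1 lam m & (invmx V *m u) l 0 != 0].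
Proof.
case=> l [h1 h2 h3 h4]; exists l; split => //.
apply: contra h4 => /eqP h; rewrite -row_mul; apply/eqP/rowP => j.
by rewrite (ord1 j) [RHS]mxE -h mxE.
Qed.

Lemma RLGE_scale (a : R) u : a != 0 -> RLGE lam m ch pos V u ->
  RLGE lam m ch pos V (a%:C *: u).
Proof.
move=> a0 [l [h1 h2 h3 h4]]; exists l; split => //.
by rewrite -scalemxAr scaler_eq0 negb_or h4 fmorph_eq0 a0.
Qed.

Lemma exists_RLGE : (0 < n)%N -> exists u, u != 0 /\ RLGE lam m ch pos V u.
Proof.
move=> hn; case: hJ => hV [mpos [_ [inj [ex _]]]].
pose i0 : 'I_q := ch (Ordinal hn).
case: (@arg_maxP _ _ _ i0 xpredT (fun c => complex.Re (lam c)) isT) => cs _ Hcs.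
have csL : inLam1 lam cs by apply/forallP => c'; exact: Hcs.
have [c1 c1A hM] := @eq_bigmax_cond _ (inLam1 lam) m
  (introT card_gt0P (ex_intro _ cs csL)).
have hM1 : M1 lam m = m c1 by rewrite -hM /M1; apply: eq_bigl.
have [l [hl1 hl2]] : exists l, ch l = c1 /\ pos l = m c1.
  by apply: ex; rewrite leqnn andbT; exact: mpos.
have Wu : (invmx V *m col l V) l 0 = 1.
  have -> : (invmx V *m col l V) l 0 = (invmx V *m V) l l.
    by rewrite !mxE; apply: eq_bigr => k _; rewrite !mxE.
  by rewrite mulVmx // mxE eqxx.
exists (col l V); split.
  by apply/eqP => h; move: Wu; rewrite h mulmx0 mxE => /eqP; rewrite eq_sym oner_eq0.
exists l; rewrite hl1 hl2 hM1; split => //.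
rewrite -row_mul; apply/eqP => h.
have := congr1 (fun M : 'M[R[i]]_1 => M 0 0) h; rewrite /= [LHS]mxE [RHS]mxE.
by rewrite Wu => /eqP; rewrite oner_eq0.
Qed.

End Main2.

Lemma ratio_bounds (R : realType) (d1 d2 U a b : R) :
  0 < d1 -> d1 <= a -> a <= U -> 0 < d2 -> d2 <= b -> b <= U ->
  d1 / U <= a / b <= U / d2.
Proof.
move=> d10 h1 h2 d20 h3 h4.
have U0 : 0 < U by apply: lt_le_trans d10 (le_trans h1 h2).
have a0 : 0 < a by apply: lt_le_trans d10 h1.
have b0 : 0 < b by apply: lt_le_trans d20 h3.
apply/andP; split.
  apply: (@le_trans _ _ (a / U)); first by apply: ler_wpM2r; [rewrite invr_ge0 ltW|].
  by apply: ler_wpM2l; [exact: ltW | rewrite lef_pV2 ?posrE].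
apply: (@le_trans _ _ (U / b)); first by apply: ler_wpM2r; [rewrite invr_ge0 ltW|].
by apply: ler_wpM2l; [exact: ltW | rewrite lef_pV2 ?posrE].
Qed.

Theorem mainTheorem2 (R : realType) (n q : nat) (A : 'M[R[i]]_n)
    (N : 'cV[R[i]]_n -> R)
    (lam : 'I_q -> R[i]) (m : 'I_q -> nat) (ch : 'I_n -> 'I_q)
    (pos : 'I_n -> nat) (V : 'M[R[i]]_n) :
  (0 < n)%N ->
  is_vector_norm N ->
  jordan_basis A lam m ch pos V ->
  [/\ 0 < inf [set ind_norm N (Q1 lam m ch pos V t) | t in [set: R]],
      (forall u : 'cV[R[i]]_n, RLGE lam m ch pos V u ->
         0 < inf [set N (Q1 lam m ch pos V t *m u) | t in [set: R]])
    & (forall y0 z0 : 'cV[R[i]]_n, y0 != 0 -> N z0 = 1 ->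
         RLGE lam m ch pos V y0 -> RLGE lam m ch pos V z0 ->
         let yh := real_complex R ((N y0)^-1) *: y0 in
         (exists c1 c2 : R, 0 < c1 /\ forall t : R,
            c1 <= N (Q1 lam m ch pos V t *m z0) / N (Q1 lam m ch pos V t *m yh) <= c2) /\
         (exists c1 c2 : R, 0 < c1 /\ forall t : R,
            c1 <= ind_norm N (Q1 lam m ch pos V t) / N (Q1 lam m ch pos V t *m yh) <= c2))].
Proof.
move=> hn hN hJ.
have [c c0 hc] := N_lower hN hn.
have [B hB] := entry_bound lam m ch pos V.
set K := B * (n%:R * KN N / c).
have up t x : N (Q1 lam m ch pos V t *m x) <= K * N x.
  exact: (N_mul_bound hN c0 hc _ (hB t)).
have low u : RLGE lam m ch pos V u ->
    exists2 d, 0 < d & forall t, d <= N (Q1 lam m ch pos V t *m u).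
  move=> /RLGE_W [l [h1 h2 h3 h4]]; exact: (lower_RLGE hJ hN c0 hc h1 h2 h3 h4).
have normalize u : u != 0 -> RLGE lam m ch pos V u ->
    N ((N u)^-1%:C *: u) = 1 /\ RLGE lam m ch pos V ((N u)^-1%:C *: u).
  move=> u0 hu; have Nu0 : 0 < N u.
    rewrite lt_def (N_ge0 hN) andbT; apply/eqP => /(N_eq0 hN) h; by rewrite h eqxx in u0.
  split; last by apply: RLGE_scale => //; rewrite invr_eq0 gt_eqF.
  by rewrite (NZ hN) rabsR ger0_norm ?invr_ge0 ?ltW // mulVf // gt_eqF.
have [x [Nx1 Rx]] : exists x, N x = 1 /\ RLGE lam m ch pos V x.
  have [u [u0 hu]] := exists_RLGE hJ hn.
  by exists ((N u)^-1%:C *: u); apply: normalize.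
have [dx dx0 hdx] := low x Rx.
have indb t : dx <= ind_norm N (Q1 lam m ch pos V t) <= K.
  set E := [set N (Q1 lam m ch pos V t *m z) | z in [set z | N z = 1]].
  have Ex : E (N (Q1 lam m ch pos V t *m x)) by exists x.
  have ubE : ubound E K.
    by move=> _ [z /= Nz <-]; have := up t z; rewrite Nz mulr1.
  apply/andP; split.
    apply: le_trans (hdx t) _; apply: ub_le_sup => //; by exists K.
  by apply: ge_sup => //; exists (N (Q1 lam m ch pos V t *m x)).
split.
- apply: lt_le_trans dx0 _; apply: lb_le_inf.
    by exists (ind_norm N (Q1 lam m ch pos V 0)); exists 0.
  by move=> _ [t _ <-]; case/andP: (indb t).
- move=> u /low [d d0 hd]; apply: lt_le_trans d0 _; apply: lb_le_inf.
    by exists (N (Q1 lam m ch pos V 0 *m u)); exists 0.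
  by move=> _ [t _ <-]; exact: hd.
- move=> y0 z0 y00 Nz0 Ry Rz yh.
  have [Nyh Ryh] := normalize y0 y00 Ry.
  have [dz dz0 hdz] := low z0 Rz.
  have [dy dy0 hdy] := low yh Ryh.
  have upz t : N (Q1 lam m ch pos V t *m z0) <= K by rewrite -[K]mulr1 -Nz0 up.
  have upy t : N (Q1 lam m ch pos V t *m yh) <= K by rewrite -[K]mulr1 -Nyh up.
  have K0 : 0 < K by apply: lt_le_trans dz0 (le_trans (hdz 0) (upz 0)).
  split.
    exists (dz / K), (K / dy); split; first by rewrite divr_gt0.
    by move=> t; apply: ratio_bounds.
  exists (dx / K), (K / dy); split; first by rewrite divr_gt0.
  by move=> t; case/andP: (indb t) => i1 i2; apply: ratio_bounds.
Qed.
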